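(* Let $\mathcal{G}=(V,L)$ be a finite connected undirected graph with monitor set $M$ and non-monitor set $N=V\setminus M$, $\sigma=|N|$, and let $P$ be a given set of measurement paths between monitors (Uncontrollable Probing). A set $S\subseteq N$ is $\sigma$-identifiable if and only if $\mathrm{MSC}(v)=\sigma$ for every $v\in S$.
   Context: A failure set is any $F\subseteq N$; a path fails iff it traverses a node of $F$. $P_F$ is the set of paths in $P$ traversing a node of $F$; $F_1,F_2$ distinguishable iff $P_{F_1}\ne P_{F_2}$. $S\subseteq N$ is $k$-identifiable if any two failure sets $F_1,F_2$ with $|F_1|,|F_2|\le k$ and $F_1\cap S\ne F_2\cap S$ are distinguishable. For $v\in N$, $P_v$ is the set of paths in $P$ traversing $v$. $\mathrm{MSC}(v)$ is the minimum cardinality of a set $V'\subseteq N\setminus\{v\}$ with $P_v\subseteq\bigcup_{w\in V'}P_w$; if no such $V'$ exists (e.g. when $v$ lies on a two-hop measurement path monitor–$v$–monitor), $\mathrm{MSC}(v):=\sigma$. *)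

(* Defs.v *)
From mathcomp Require Import all_boot.
Set Implicit Arguments. Unset Strict Implicit. Unset Printing Implicit Defensive.

Section Tomography.
Variable V : finType.

Definition nonmon (M : {set V}) : {set V} := ~: M.

Definition measurement_path (e : rel V) (M : {set V}) (p : seq V) : bool :=
  match p with
  | x :: q => [&& q != [::], path e x q, uniq p, x \in M & last x q \in M]
  | [::] => false
  end.

Definition traverses_set (F : {set V}) (p : seq V) : bool := has (fun v => v \in F) p.

Definition P_of (P : seq (seq V)) (F : {set V}) : seq (seq V) :=
  [seq p <- P | traverses_set F p].

Definition P_node (P : seq (seq V)) (v : V) : seq (seq V) := P_of P [set v].

Definition distinguishable (P : seq (seq V)) (F1 F2 : {set V}) : Prop :=
  P_of P F1 <> P_of P F2.

Definition identifiable (M : {set V}) (P : seq (seq V)) (k : nat) (S : {set V}) : Prop :=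
  forall F1 F2 : {set V},
    F1 \subset nonmon M -> F2 \subset nonmon M ->
    #|F1| <= k -> #|F2| <= k ->
    F1 :&: S != F2 :&: S -> distinguishable P F1 F2.

Definition covers (P : seq (seq V)) (v : V) (V' : {set V}) : bool :=
  all (fun p => traverses_set V' p) (P_node P v).

Definition MSC (M : {set V}) (P : seq (seq V)) (v : V) : nat :=
  if [exists V' : {set V}, (V' \subset nonmon M :\ v) && covers P v V']
  then \big[minn/#|nonmon M|]_(V' : {set V} | (V' \subset nonmon M :\ v) && covers P v V') #|V'|
  else #|nonmon M|.

End Tomography.

(* Main.v *)
Require Import Defs.
From mathcomp Require Import all_boot.

Lemma covers_mono (V : finType) (P : seq (seq V)) v (A B : {set V}) :
  covers P v A -> A \subset B -> covers P v B.
Proof.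
move=> /allP h sub; apply/allP => p hp.
have := h p hp; apply: sub_has => x; exact: (subsetP sub).
Qed.

Lemma bigmin_le (I : finType) (P : pred I) (F : I -> nat) x j :
  P j -> \big[minn/x]_(i | P i) F i <= F j.
Proof.
move=> Pj; rewrite -big_filter.
have : j \in [seq i <- index_enum I | P i] by rewrite mem_filter Pj mem_index_enum.
elim: [seq i <- index_enum I | P i] => //= a s IH; rewrite big_cons inE.
case/orP => [/eqP-> | /IH h]; first exact: geq_minl.
exact: leq_trans (geq_minr _ _) h.
Qed.

Lemma MSC_eq (V : finType) (M : {set V}) (P : seq (seq V)) v :
  v \in nonmon M ->
  (MSC M P v = #|nonmon M|) <-> ~~ covers P v (nonmon M :\ v).
Proof.
move=> vN; rewrite /MSC; case: ifP => [/existsP [V' /andP[sub cov]] | /negbT nex].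
  have cN : covers P v (nonmon M :\ v) by apply: (covers_mono _ _ _ _ _ cov sub).
  rewrite cN; split => // Eq; exfalso.
  have le : \big[minn/#|nonmon M|]_(V'0 : {set V} | (V'0 \subset nonmon M :\ v)
                && covers P v V'0) #|V'0| <= #|nonmon M :\ v|.
    apply: (@bigmin_le _ (fun V'0 : {set V} => (V'0 \subset nonmon M :\ v) && covers P v V'0) (fun V'0 => #|V'0|)).
    by rewrite subxx cN.
  move: le; rewrite Eq (cardsD1 v (nonmon M)) vN.
  by rewrite add1n ltnn.
split => // _; apply/negP => c; move/negP: nex; apply; apply/existsP.
by exists (nonmon M :\ v); rewrite subxx c.
Qed.

Theorem proposition5 (V : finType) (e : rel V) (M : {set V})
    (P : seq (seq V)) (S : {set V}) :
  symmetric e -> irreflexive e ->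
  (forall x y : V, connect e x y) ->
  (forall p, p \in P -> measurement_path e M p) ->
  S \subset nonmon M ->
  identifiable M P #|nonmon M| S <->
  (forall v, v \in S -> MSC M P v = #|nonmon M|).
Proof.
move=> _ _ _ _ SN; split.
  move=> H v vS; have vN := subsetP SN v vS.
  apply: (proj2 (MSC_eq _ _ P _ vN)); apply/negP => c.
  apply: (H (nonmon M) (nonmon M :\ v)) => //.
  - exact: subsetDl.
  - exact: subset_leq_card (subsetDl _ _).
  - apply/eqP => E; have : v \in nonmon M :&: S by rewrite inE vN vS.
    by rewrite E !inE eqxx.
  apply: eq_in_filter => p pP; apply/idP/idP; last first.
    apply: sub_has => x; rewrite !inE; by case/andP.
  case/hasP => x xp xN; case: (x =P v) => [exv|ne].
    have pPv : p \in P_node P v.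
      rewrite mem_filter pP andbT; apply/hasP; exists x => //; by rewrite inE exv.
    exact: (allP c p pPv).
  apply/hasP; exists x => //; rewrite !inE; apply/andP; split => //; [exact/eqP | by move: xN; rewrite !inE].
move=> H F1 F2 s1 s2 _ _ ne E.
case/boolP: [exists v, (v \in S) && ((v \in F1) != (v \in F2))] =>
  [/existsP[v /andP[vS dv]] | /existsPn nex]; last first.
  move/eqP: ne; apply; apply/setP => x; have := nex x; rewrite !inE.
  by case: (x \in S); rewrite ?andbT ?andbF //; move/negPn/eqP.
have vN := subsetP SN v vS.
have /(MSC_eq _ _ P _ vN) nc := H v vS.
case/allPn: nc => p; rewrite mem_filter => /andP[tv pP] npt.
have key : forall F : {set V}, F \subset nonmon M -> traverses_set F p = (v \in F).
  move=> F sF; apply/hasP/idP => [[x xp xF] | vF].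
    case: (x =P v) => [<- // | ne'].
    exfalso; move/negP: npt; apply; apply/hasP; exists x => //.
    have := subsetP sF x xF; rewrite !inE => ->; rewrite andbT; exact/eqP.
  exists v => //; move/hasP: tv => [y yp]; rewrite inE => /eqP <- //.
have := congr1 (fun s => p \in s) E; rewrite /= !mem_filter pP !andbT.
rewrite (key _ s1) (key _ s2) => eq12; move: dv; by rewrite eq12 eqxx.
Qed.
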